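(* Let $G$ be a graph with a cycle double cover $\mathcal D$, and let $G^+$ be a weak 9-enlargement of $G$, obtained from an edge $xy$ and a vertex $u$ (with no disk containing both $u$ and the edge $xy$) by subdividing $xy$ and joining the new vertex to $u$. If $G\setminus\{u,x,y\}$ is connected, then $G^+$ has a minor isomorphic to an $i$-enlargement of $G$ with respect to $\mathcal D$ for some $i\in\{1,3,9\}$.
   Context: Graphs are finite and simple. A cycle double cover of $G$ is a set $\mathcal D$ of distinct cycles (disks) such that each edge lies in exactly two disks. Two elements (vertices or edges) are confluent if some disk contains both. Splitting: for a vertex $v$ of degree $\ge4$ and a partition $(N_1,N_2)$ of its neighbours with $|N_1|,|N_2|\ge2$, replace $v$ by adjacent new vertices $v_1,v_2$ with $v_i$ adjacent to $N_i$. The split is conforming (w.r.t. $\mathcal D$) if (S1) among the disks containing $v$ exactly two, $D_1,D_2$, have their two neighbours of $v$ one in $N_1$ and one in $N_2$, and (S2) $D_1\cap D_2=\{v\}$; otherwise non-conforming. Enlargements: a 1-enlargement adds an edge between two non-confluent vertices; a 3-enlargement performs a non-conforming split of a vertex; a 9-enlargement, for a vertex $u$ and an edge $xy$ such that no disk contains both $u$ and the edge $xy$, $u$ is confluent with $x$ and with $y$, $u$ is adjacent to neither $x$ nor $y$, and $G\setminus\{u,x,y\}$ is connected, subdivides $xy$ by a new vertex and joins it to $u$. A weak 9-enlargement is obtained in the same way from any edge $xy$ and vertex $u$ such that no disk contains both $u$ and the edge $xy$. *)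

(* Defs.v *)
(* Finite simple graphs are given by a symmetric irreflexive
   relation [e : rel T] on a finType [T]. *)
From mathcomp Require Import all_boot all_order.
Set Implicit Arguments.
Unset Strict Implicit.
Unset Printing Implicit Defensive.

Section Graphs.
Variable T : finType.
Variable e : rel T.

Definition is_edge (E : {set T}) : bool :=
  [exists x, exists y, e x y && (E == [set x; y])].

(* A disk (cycle) is represented by its edge set C. *)
Definition cyc_adj (C : {set {set T}}) : rel T :=
  fun x y => (x != y) && ([set x; y] \in C).

Definition verts (C : {set {set T}}) : {set T} :=
  [set x | [exists y, cyc_adj C x y]].

Definition is_cycle (C : {set {set T}}) : bool :=
  [&& C != set0,
      [forall E in C, is_edge E],
      [forall x in verts C, #|[set y | cyc_adj C x y]| == 2] &
      [forall x in verts C, forall y in verts C, connect (cyc_adj C) x y]].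

Definition is_cdc (D : {set {set {set T}}}) : Prop :=
  (forall C, C \in D -> is_cycle C) /\
  (forall x y, e x y -> #|[set C in D | [set x; y] \in C]| = 2).

Definition confluent_vv (D : {set {set {set T}}}) (a b : T) : Prop :=
  exists2 C, C \in D & (a \in verts C) /\ (b \in verts C).

Definition disk_contains_ve (D : {set {set {set T}}}) (u x y : T) : Prop :=
  exists2 C, C \in D & (u \in verts C) /\ ([set x; y] \in C).

Definition connected_in (S : {set T}) : Prop :=
  forall a b, a \in S -> b \in S ->
    connect (fun p q => [&& p \in S, q \in S & e p q]) a b.

Definition nbhd (v : T) : {set T} := [set w | e v w].

Definition add_edge (a b : T) : rel T :=
  fun p q => [|| e p q, (p == a) && (q == b) | (p == b) && (q == a)].

(* ---------- splitting ----------
   Vertex v is replaced by v1 := Some v (adjacent to N1) and v2 := None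
   (adjacent to N2 := N(v) \ N1); v1 and v2 are adjacent. *)
Definition split_adj (v : T) (N1 : {set T}) : rel (option T) :=
  fun p q =>
  let N2 := nbhd v :\: N1 in
  match p, q with
  | Some a, Some b =>
      if a == v then b \in N1 else if b == v then a \in N1 else e a b
  | Some a, None => (a == v) || (a \in N2)
  | None, Some b => (b == v) || (b \in N2)
  | None, None => false
  end.

Definition split_ok (v : T) (N1 : {set T}) : Prop :=
  [/\ 4 <= #|nbhd v|, N1 \subset nbhd v, 2 <= #|N1| & 2 <= #|nbhd v :\: N1|].

Definition crosses (v : T) (N1 : {set T}) (C : {set {set T}}) : bool :=
  [exists w1 in N1, exists w2 in nbhd v :\: N1,
     ([set v; w1] \in C) && ([set v; w2] \in C)].

Definition conforming (D : {set {set {set T}}}) (v : T) (N1 : {set T}) : Prop :=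
  exists D1 D2, [/\ D1 \in D, D2 \in D, D1 != D2,
     [set C in D | (v \in verts C) && crosses v N1 C] = [set D1; D2] &
     verts D1 :&: verts D2 = [set v]].

Definition nonconforming_split (D : {set {set {set T}}}) (v : T) (N1 : {set T})
  : Prop := split_ok v N1 /\ ~ conforming D v N1.

Definition subdiv_join (u x y : T) : rel (option T) :=
  fun p q =>
  match p, q with
  | Some a, Some b => e a b && ~~ (((a == x) && (b == y)) || ((a == y) && (b == x)))
  | Some a, None => [|| a == x, a == y | a == u]
  | None, Some b => [|| b == x, b == y | b == u]
  | None, None => false
  end.

(* Conditions for a (non-weak) 9-enlargement from u and the edge xy. *)
Definition nine_ok (D : {set {set {set T}}}) (u x y : T) : Prop :=
  [/\ e x y, ~ disk_contains_ve D u x y,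
      confluent_vv D u x /\ confluent_vv D u y,
      ~~ e u x /\ ~~ e u y &
      connected_in (~: [set u; x; y])].

End Graphs.

(* G has a minor isomorphic to H (H-model with branch sets f h). *)
Definition has_minor (T : finType) (e : rel T) (T' : finType) (e' : rel T')
  : Prop :=
  exists f : T' -> {set T},
    [/\ forall h, f h != set0,
        forall h, connected_in e (f h),
        forall h h', h != h' -> [disjoint f h & f h'] &
        forall h h', e' h h' -> exists a b, [/\ a \in f h, b \in f h' & e a b]].

(* Main.v *)
Require Import Defs.
From mathcomp Require Import all_boot.
From Stdlib Require Import Classical.
Set Implicit Arguments. Unset Strict Implicit. Unset Printing Implicit Defensive.

Section Aux.
Variable T : finType.
Variable e : rel T.
Hypothesis se : symmetric e.

Lemma set2_eq (x w p q : T) : x != w -> [set x; w] = [set p; q] ->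
  (x == p) && (w == q) || (x == q) && (w == p).
Proof.
move=> xw E.
have hx : x \in [set p; q] by rewrite -E set21.
have hw : w \in [set p; q] by rewrite -E set22.
move: hx hw xw; rewrite !inE => /orP[]/eqP-> /orP[]/eqP->; rewrite ?eqxx ?orbT //= ?eqxx; by [] || by rewrite orbT.
Qed.

Lemma edge_of_cycle C a b : is_cycle e C -> [set a; b] \in C -> a != b -> e a b.
Proof.
case/and4P=> _ /forallP HE _ _ Hin ab.
move: (HE [set a; b]); rewrite Hin /= => /existsP[p /existsP[q /andP[epq /eqP E]]].
case/orP: (set2_eq ab E) => /andP[/eqP-> /eqP->] //; by rewrite se.
Qed.

Lemma other_nb C x y : is_cycle e C -> [set x; y] \in C -> x != y ->
  exists w, [/\ w != y, x != w & [set x; w] \in C].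
Proof.
case/and4P=> _ _ /forallP HV _ HC xy.
have xv : x \in verts C by rewrite inE; apply/existsP; exists y; rewrite /cyc_adj xy HC.
move: (HV x); rewrite xv /= => /cards2P[a [b [ab E]]].
have yin : y \in [set v | cyc_adj C x v] by rewrite inE /cyc_adj xy HC.
have [w [wy win]] : exists w, w != y /\ w \in [set v | cyc_adj C x v].
  case: (eqVneq y a) => [ya|ya].
  - exists b; rewrite E set22; split=> //; by rewrite ya eq_sym.
  - exists a; rewrite E set21; split=> //; by rewrite eq_sym.
move: win; rewrite inE /cyc_adj => /andP[xw HW]; by exists w.
Qed.

Lemma disks_of_edge D a b : is_cdc e D -> e a b ->
  exists C1 C2, [/\ C1 \in D, C2 \in D, C1 != C2, [set a; b] \in C1 & [set a; b] \in C2].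
Proof.
case=> _ H eab; move: (H a b eab) => /eqP/cards2P[C1 [C2 [ne E]]].
have h1 : C1 \in [set C in D | [set a; b] \in C] by rewrite E set21.
have h2 : C2 \in [set C in D | [set a; b] \in C] by rewrite E set22.
move: h1 h2; rewrite !inE => /andP[? ?] /andP[? ?]; by exists C1, C2.
Qed.

Lemma in_verts (C : {set {set T}}) (a b : T) : a != b -> [set a; b] \in C -> a \in verts C.
Proof. by move=> ab H; rewrite inE; apply/existsP; exists b; rewrite /cyc_adj ab H. Qed.

Lemma in_verts2 (C : {set {set T}}) (a b : T) : a != b -> [set a; b] \in C -> b \in verts C.
Proof. by move=> ab H; apply: (@in_verts _ _ a); rewrite 1?eq_sym // setUC. Qed.

End Aux.

Section CasesA.
Variable T : finType.
Variable e : rel T.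
Hypothesis se : symmetric e.
Hypothesis ie : irreflexive e.

Lemma u_neq D u x y : is_cdc e D -> e x y -> x != y -> ~ disk_contains_ve D u x y ->
  u != x /\ u != y.
Proof.
move=> cdc exy xy nd.
have [C1 [C2 [h1 h2 _ c1 _]]] := disks_of_edge cdc exy.
split; apply/eqP=> E; apply: nd; exists C1 => //; split=> //; rewrite E.
  exact: in_verts c1.
exact: in_verts2 c1.
Qed.

Lemma caseA D u x y : is_cdc e D -> e x y -> x != y -> ~ disk_contains_ve D u x y ->
  has_minor (subdiv_join e u x y) (add_edge e u x).
Proof.
move=> cdc exy xy nd.
have [ux uy] := u_neq cdc exy xy nd.
pose f h := if h == x then [set Some x; None] else [set Some h].
have fin h : Some h \in f h by rewrite /f; case: eqP => [->|_]; rewrite ?set21 ?set11.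
have fNx : None \in f x by rewrite /f eqxx set22.
exists f; split.
- move=> h; apply/set0Pn; exists (Some h); exact: fin.
- move=> h a b; rewrite /f; case: eqP => [_|_].
  + have sx : subdiv_join e u x y (Some x) None by rewrite /= eqxx.
    have xs : subdiv_join e u x y None (Some x) by rewrite /= eqxx.
    rewrite !inE => /orP[]/eqP-> /orP[]/eqP->; try exact: connect0;
      apply: connect1; rewrite !inE ?eqxx ?orbT //=.
  + by rewrite !inE => /eqP-> /eqP->; exact: connect0.
- move=> h h' hh'; apply/pred0P => p /=; rewrite /f.
  case: (eqVneq h x) => [hx|hx]; case: (eqVneq h' x) => [h'x|h'x];
    rewrite ?eqxx ?(negbTE hx) ?(negbTE h'x) //= !inE.
  + by move: hh'; rewrite hx h'x eqxx.
  + by apply/negP=> /andP[/orP[]/eqP-> // /eqP [] /eqP]; rewrite eq_sym (negbTE h'x).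
  + by apply/negP=> /andP[/eqP-> /orP[]/eqP // [] /eqP]; rewrite (negbTE hx).
  + by apply/negP=> /andP[/eqP-> /eqP [] /eqP]; rewrite (negbTE hh').
- move=> h h'; rewrite /add_edge => /or3P[ehh'|/andP[/eqP-> /eqP->]|/andP[/eqP-> /eqP->]].
  + case: (boolP ((h == x) && (h' == y))) => [/andP[/eqP-> /eqP->]|n1].
      by exists None, (Some y); rewrite fin fNx /= eqxx orbT.
    case: (boolP ((h == y) && (h' == x))) => [/andP[/eqP-> /eqP->]|n2].
      by exists (Some y), None; rewrite fin fNx /= eqxx orbT.
    by exists (Some h), (Some h'); rewrite !fin /= ehh' negb_or n1 n2.
  + by exists (Some u), None; rewrite fin fNx /= eqxx !orbT.
  + by exists None, (Some u); rewrite fin fNx /= eqxx !orbT.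
Qed.
End CasesA.

Section CasesC.
Variable T : finType.
Variable e : rel T.
Hypothesis se : symmetric e.
Hypothesis ie : irreflexive e.

Lemma id_minor (T' : finType) (r r' : rel T') :
  (forall p q, r' p q -> r p q) -> has_minor r r'.
Proof.
move=> H; exists (fun p => [set p]); split.
- by move=> h; apply/set0Pn; exists h; rewrite set11.
- by move=> h a b; rewrite !inE => /eqP-> /eqP->; exact: connect0.
- by move=> h h' hh'; rewrite disjoints1 inE.
- by move=> h h' /H ?; exists h, h'; rewrite !set11.
Qed.

Lemma caseC D u x y : is_cdc e D -> e x y -> x != y -> e u x ->
  ~ disk_contains_ve D u x y ->
  exists N1, nonconforming_split e D x N1 /\
     has_minor (subdiv_join e u x y) (split_adj e x N1).
Proof.
move=> cdc exy xy eux nd.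
have [ux uy] := u_neq cdc exy xy nd.
have exu : e x u by rewrite se.
have cyc C : C \in D -> is_cycle e C by move=> h; exact: cdc.1.
have [C1 [C2 [h1 h2 C12 c1 c2]]] := disks_of_edge cdc exy.
have [C3 [C4 [h3 h4 _ c3 _]]] := disks_of_edge cdc exu.
have [w1 [w1y xw1 cw1]] := other_nb (cyc _ h1) c1 xy.
have [w2 [w2y xw2 cw2]] := other_nb (cyc _ h2) c2 xy.
have xu : x != u by rewrite eq_sym.
have [z3 [z3u xz3 cz3]] := other_nb (cyc _ h3) c3 xu.
have ew1 : e x w1 := edge_of_cycle se (cyc _ h1) cw1 xw1.
have ew2 : e x w2 := edge_of_cycle se (cyc _ h2) cw2 xw2.
have ez3 : e x z3 := edge_of_cycle se (cyc _ h3) cz3 xz3.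
have w1u : w1 != u.
  apply/eqP=> E; apply: nd; exists C1 => //; split=> //.
  by rewrite -E; exact: in_verts2 cw1.
have w2u : w2 != u.
  apply/eqP=> E; apply: nd; exists C2 => //; split=> //.
  by rewrite -E; exact: in_verts2 cw2.
have uv3 : u \in verts C3 by exact: in_verts2 c3.
have z3y : z3 != y.
  by apply/eqP=> E; apply: nd; exists C3 => //; split=> //; rewrite -E.
have C13 : C1 != C3.
  by apply/eqP=> E; apply: nd; exists C3 => //; split=> //; rewrite -E.
have C23 : C2 != C3.
  by apply/eqP=> E; apply: nd; exists C3 => //; split=> //; rewrite -E.
have inN v : (v \in nbhd e x) = e x v by rewrite inE.
have deg : 4 <= #|nbhd e x|.
  rewrite leqNgt; apply/negP => lt4.
  pose S3 := y |: (u |: [set w1]).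
  have cS3 : #|S3| = 3.
    rewrite /S3 !cardsU1 cards1 !inE negb_or (eq_sym y u) uy (eq_sym y w1) w1y.
    by rewrite (eq_sym u w1) w1u.
  have sS3 : S3 \subset nbhd e x.
    by apply/subsetP => v; rewrite !inE => /or3P[]/eqP->.
  have only v : e x v -> v != y -> v != u -> v = w1.
    move=> ev vy vu; apply/eqP; apply: contraLR lt4 => vw1.
    have : #|v |: S3| <= #|nbhd e x|.
      apply: subset_leq_card; apply/subsetP => t; rewrite in_setU1 => /orP[/eqP->|].
        by rewrite inN.
      exact: (subsetP sS3).
    by rewrite cardsU1 cS3 !inE (negbTE vy) (negbTE vu) (negbTE vw1) /= -leqNgt.
  have E2 := only _ ew2 w2y w2u.
  have E3 := only _ ez3 z3y z3u.
  have := (cdc.2 x w1 ew1).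
  have : 2 < #|[set C in D | [set x; w1] \in C]|.
    apply/card_gt2P; exists C1, C2, C3; split.
      by rewrite !inE h1 h2 h3 cw1 -{1}E2 cw2 -{1}E3 cz3.
    by split; [exact: C12 | exact: C23 | rewrite eq_sym; exact: C13].
  by move=> H E; rewrite E in H.
pose N1 := nbhd e x :\: [set y; u].
have N2E : nbhd e x :\: N1 = [set y; u].
  rewrite /N1 setDDr setDv set0U; apply/setIidPr.
  by apply/subsetP => v; rewrite !inE => /orP[]/eqP->.
exists N1; split; first split.
- split=> //; first exact: subsetDl.
  + move: deg; rewrite /N1 cardsD.
    have -> : #|nbhd e x :&: [set y; u]| = 2.
      have : nbhd e x :&: [set y; u] = [set y; u].
        by apply/setIidPr; apply/subsetP => v; rewrite !inE => /orP[]/eqP->.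
      by move=> ->; rewrite cards2 eq_sym uy.
    by move: #|nbhd e x| => n; case: n => [|[|[|[|n]]]] // _; rewrite !subSS subn0.
  + by rewrite N2E cards2 eq_sym uy.
- case=> [D1 [D2 [hD1 hD2 D12 E V]]].
  have cross C w : C \in D -> [set x; y] \in C -> [set x; w] \in C -> e x w ->
      w != y -> w != u -> C \in [set D1; D2].
    move=> hC cy cw ew wy wu; rewrite -E inE hC /= (in_verts xy cy) /=.
    apply/existsP; exists w; rewrite /N1 !inE negb_or wy wu ew /=.
    apply/existsP; exists y; by rewrite N2E !inE eqxx /= cy cw.
  have i1 := cross _ _ h1 c1 cw1 ew1 w1y w1u.
  have i2 := cross _ _ h2 c2 cw2 ew2 w2y w2u.
  have yv1 := in_verts2 xy c1.
  have yv2 := in_verts2 xy c2.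
  have : y \in verts D1 :&: verts D2.
    move: i1 i2; rewrite !in_set2 => /orP[]/eqP E1 /orP[]/eqP E2'.
    - by move: C12; rewrite E1 E2' eqxx.
    - by rewrite inE -E1 -E2' yv1 yv2.
    - by rewrite inE -E1 -E2' yv1 yv2.
    - by move: C12; rewrite E1 E2' eqxx.
  by rewrite V inE => /eqP yx; move: xy; rewrite yx eqxx.
- apply: id_minor => [[a|] [b|]] //=.
  + case: eqP => [-> | ax].
      rewrite /N1 !inE negb_or => /andP[/andP[/negbTE -> _] ->] /=.
      by rewrite (negbTE xy).
    case: eqP => [-> | bx].
      rewrite /N1 !inE negb_or => /andP[/andP[/negbTE ay' _] ea].
      by rewrite se ea ay'.
    move=> ->; apply/negP => /orP[]/andP[/eqP] //.
  + rewrite N2E !inE => /orP[->|/orP[]->] //; by rewrite !orbT.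
  + rewrite N2E !inE => /orP[->|/orP[]->] //; by rewrite !orbT.
Qed.
End CasesC.

Lemma has_minor_ext (T T' : finType) (r r2 : rel T) (e' : rel T') :
  (forall p q, r p q = r2 p q) -> has_minor r e' -> has_minor r2 e'.
Proof.
move=> E [f [H1 H2 H3 H4]]; exists f; split=> //.
- move=> h a b ha hb; have := H2 h a b ha hb.
  by rewrite (@eq_connect _ _ (fun p q => [&& p \in f h, q \in f h & r2 p q])) // => p q; rewrite E.
- by move=> h h' /H4 [a [b [ha hb hr]]]; exists a, b; rewrite -E.
Qed.

Lemma subdiv_sym (T : finType) (e : rel T) (u x y : T) : symmetric e ->
  forall p q, subdiv_join e u y x p q = subdiv_join e u x y p q.
Proof.
move=> se [a|] [b|] //=; last by rewrite orbA (orbC (b == y)) -orbA.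
- by rewrite orbC.
- by rewrite orbA (orbC (a == y)) -orbA.
Qed.

Lemma dcv_sym (T : finType) (D : {set {set {set T}}}) u x y :
  ~ disk_contains_ve D u x y -> ~ disk_contains_ve D u y x.
Proof. by move=> nd [C hC [uv c]]; apply: nd; exists C => //; rewrite setUC. Qed.

Theorem lemma6p1 (T : finType) (e : rel T) (D : {set {set {set T}}})
    (u x y : T) :
  symmetric e -> irreflexive e -> is_cdc e D ->
  e x y -> ~ disk_contains_ve D u x y ->
  connected_in e (~: [set u; x; y]) ->
  (* i = 1 *)
  (exists a b : T, [/\ a != b, ~ confluent_vv D a b &
      has_minor (subdiv_join e u x y) (add_edge e a b)])
  \/
  (* i = 3 *)
  (exists (v : T) (N1 : {set T}), nonconforming_split e D v N1 /\
      has_minor (subdiv_join e u x y) (split_adj e v N1))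
  \/
  (* i = 9 *)
  (exists u' x' y' : T, nine_ok e D u' x' y' /\
      has_minor (subdiv_join e u x y) (subdiv_join e u' x' y')).
Proof.
move=> se ie cdc exy nd conn.
have xy : x != y by apply/eqP=> E; move: exy; rewrite E ie.
have yx : y != x by rewrite eq_sym.
have eyx : e y x by rewrite se.
have nd' := dcv_sym nd.
have [ux uy] := u_neq cdc exy xy nd.
case: (classic (confluent_vv D u x)) => [cx|ncx].
  2: by left; exists u, x; split=> //; exact: (caseA cdc exy xy nd).
case: (classic (confluent_vv D u y)) => [cy|ncy].
  2: by left; exists u, y; split=> //; apply: (has_minor_ext (subdiv_sym _ _ _ se)); exact: (caseA cdc eyx yx nd').
case: (boolP (e u x)) => [eux|neux].
  by right; left; have [N1 [H1 H2]] := caseC se cdc exy xy eux nd; exists x, N1.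
case: (boolP (e u y)) => [euy|neuy].
  right; left; have [N1 [H1 H2]] := caseC se cdc eyx yx euy nd'; exists y, N1.
  by split=> //; apply: (has_minor_ext (subdiv_sym _ _ _ se)).
right; right; exists u, x, y; split; first by split.
exact: id_minor.
Qed.
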